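(* Consider the disclosure model described in the context with a fixed, commonly known type $\theta\in\Theta$ (no information asymmetry). Let $\underline{\mathbf{e}}(\theta):=\min\{e\in E:\pi(\theta,e)\ge\pi(\theta,\bar e)\}$. An emission level $e^*\in E$ can be implemented (i.e., there exists $d\in\mathcal{D}$ such that $e^*$ is belief-compatible under $d$ and maximizes $\pi(\theta,\cdot)$ over $\tilde E_d$) if and only if $e^*\ge\underline{\mathbf{e}}(\theta)$. Moreover, any such $e^*$ is implemented by the binary disclosure policy \[d(e)=\begin{cases}e^*,& e\le e^*,\\ \bar e,& e>e^*.\end{cases}\]
   Context: Emissions lie in $E=[0,\bar e]\subset\mathbb{R}_+$ with $\bar e>0$; types lie in $\Theta=[\underline\theta,\bar\theta]$. The firm's profit is $\tilde\pi(\theta,e,\tilde e)$, where $e$ is the actual emission and $\tilde e\in E$ the emission perceived by the market; for each $\theta$ it is strictly increasing in $e$ and strictly decreasing in $\tilde e$. Standing assumptions: $\tilde\pi$ is continuous on $\Theta\times E\times E$ and $C^2$ on its interior; $\pi(\theta,e):=\tilde\pi(\theta,e,e)$ is strictly concave in $e$ for each $\theta$; and $\pi(\theta,0)<\pi(\theta,\bar e)$ for all $\theta$. A disclosure policy is a function $d:E\to E$ (the partition of $E$ into its level sets). An emission level $e$ is belief-compatible under $d$ if $e\ge e'$ for all $e'$ with $d(e')=d(e)$. Let $\tilde E_d$ be the set of belief-compatible levels. The firm of type $\theta$ effectively chooses $e\in\tilde E_d$ to maximize $\pi(\theta,e)$, because the market believes the firm chose the highest emission consistent with the disclosure. $\mathcal{D}$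 is the set of policies for which this maximum is attained for every type. *)

(* Defs.v *)
From Stdlib Require Import Reals.
From Coquelicot Require Import Coquelicot.
Open Scope R_scope.

Definition inE (ebar e : R) : Prop := 0 <= e <= ebar.

Definition inTheta (thl thh th : R) : Prop := thl <= th <= thh.

Definition pi_diag (tpi : R -> R -> R -> R) (th e : R) : R := tpi th e e.

(* A disclosure policy is a function d : E -> E (represented as R -> R
   mapping E into E; its values outside E are irrelevant). *)
Definition is_policy (ebar : R) (d : R -> R) : Prop :=
  forall e, inE ebar e -> inE ebar (d e).

Definition belief_compatible (ebar : R) (d : R -> R) (e : R) : Prop :=
  inE ebar e /\ forall e', inE ebar e' -> d e' = d e -> e' <= e.

Definition maximizes_on_Ed (tpi : R -> R -> R -> R) (ebar : R) (d : R -> R)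
  (th e : R) : Prop :=
  belief_compatible ebar d e /\
  forall e', belief_compatible ebar d e' -> pi_diag tpi th e' <= pi_diag tpi th e.

Definition in_D (tpi : R -> R -> R -> R) (thl thh ebar : R) (d : R -> R) : Prop :=
  is_policy ebar d /\
  forall th, inTheta thl thh th -> exists e, maximizes_on_Ed tpi ebar d th e.

Definition implements (tpi : R -> R -> R -> R) (thl thh ebar th : R)
  (d : R -> R) (estar : R) : Prop :=
  in_D tpi thl thh ebar d /\ maximizes_on_Ed tpi ebar d th estar.

Definition binary_policy (ebar estar : R) (e : R) : R :=
  if Rle_dec e estar then estar else ebar.

(* The standing assumptions (except C^2 smoothness). *)
Definition standing_assumptions (tpi : R -> R -> R -> R) (thl thh ebar : R) : Prop :=
  0 < ebar /\ thl <= thh /\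
  (forall th e1 e2 et, inTheta thl thh th -> inE ebar e1 -> inE ebar e2 ->
     inE ebar et -> e1 < e2 -> tpi th e1 et < tpi th e2 et) /\
  (forall th e et1 et2, inTheta thl thh th -> inE ebar e -> inE ebar et1 ->
     inE ebar et2 -> et1 < et2 -> tpi th e et2 < tpi th e et1) /\
  (forall p : R * R * R,
     inTheta thl thh (fst (fst p)) -> inE ebar (snd (fst p)) -> inE ebar (snd p) ->
     filterlim (fun q : R * R * R => tpi (fst (fst q)) (snd (fst q)) (snd q))
       (within (fun q : R * R * R => inTheta thl thh (fst (fst q)) /\
                  inE ebar (snd (fst q)) /\ inE ebar (snd q)) (locally p))
       (locally (tpi (fst (fst p)) (snd (fst p)) (snd p)))) /\
  (forall th x y t, inTheta thl thh th -> inE ebar x -> inE ebar y -> x <> y ->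
     0 < t < 1 ->
     t * pi_diag tpi th x + (1 - t) * pi_diag tpi th y
       < pi_diag tpi th (t * x + (1 - t) * y)) /\
  (forall th, inTheta thl thh th -> pi_diag tpi th 0 < pi_diag tpi th ebar).

Definition is_lower_bound_emission (tpi : R -> R -> R -> R) (ebar th el : R) : Prop :=
  (inE ebar el /\ pi_diag tpi th el >= pi_diag tpi th ebar) /\
  forall e, inE ebar e -> pi_diag tpi th e >= pi_diag tpi th ebar -> el <= e.

(* Main.v *)
Require Import Defs.
From Stdlib Require Import Reals Lra.
From Coquelicot Require Import Coquelicot.
Open Scope R_scope.

Lemma ebar_bc ebar d : 0 <= ebar -> belief_compatible ebar d ebar.
Proof. intros H; split; [unfold inE; lra|]. intros e' [_ He'] _; lra. Qed.

Lemma bin_bc ebar estar e : inE ebar estar ->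
  belief_compatible ebar (binary_policy ebar estar) e -> e = estar \/ e = ebar.
Proof.
  intros [Hs0 Hs1] [[He0 He1] Hc]. unfold binary_policy in Hc.
  destruct (Rle_dec e estar) as [Hle|Hgt].
  - left. assert (estar <= e).
    { apply Hc. unfold inE; lra. destruct (Rle_dec estar estar); [reflexivity|lra]. }
    lra.
  - right. assert (ebar <= e).
    { apply Hc. unfold inE; lra. destruct (Rle_dec ebar estar); [lra|reflexivity]. }
    lra.
Qed.

Lemma estar_bc ebar estar : inE ebar estar ->
  belief_compatible ebar (binary_policy ebar estar) estar.
Proof.
  intros Hs. split; [exact Hs|]. intros e' [He0 He1] Heq. unfold binary_policy in Heq.
  destruct Hs as [Hs0 Hs1].
  destruct (Rle_dec e' estar); [lra|]. destruct (Rle_dec estar estar); lra.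
Qed.

Theorem proposition1 (tpi : R -> R -> R -> R) (thl thh ebar th el : R) :
  standing_assumptions tpi thl thh ebar ->
  inTheta thl thh th ->
  is_lower_bound_emission tpi ebar th el ->
  forall estar : R, inE ebar estar ->
    ((exists d : R -> R, implements tpi thl thh ebar th d estar) <-> el <= estar) /\
    (el <= estar -> implements tpi thl thh ebar th (binary_policy ebar estar) estar).
Proof.
  intros [Heb [_ [_ [_ [_ [Hconc _]]]]]] Hth [[Hel Hpel] Hmin] estar Hs.
  assert (Part2 : el <= estar -> implements tpi thl thh ebar th (binary_policy ebar estar) estar).
  { intros Hle.
    assert (Hpi : pi_diag tpi th ebar <= pi_diag tpi th estar).
    { destruct Hs as [Hs0 Hs1]. destruct Hel as [Hel0 Hel1].
      destruct (Req_dec estar el) as [->|Hne1]; [lra|].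
      destruct (Req_dec estar ebar) as [->|Hne2]; [lra|].
      set (t := (ebar - estar) / (ebar - el)).
      assert (Ht : 0 < t < 1).
      { unfold t; split.
        - apply Rdiv_lt_0_compat; lra.
        - unfold Rdiv. apply (Rmult_lt_reg_r (ebar - el)); [lra|]. rewrite Rmult_assoc, Rinv_l by lra. lra. }
      assert (Hx : t * el + (1 - t) * ebar = estar).
      { unfold t; field; lra. }
      pose proof (Hconc th el ebar t Hth (conj Hel0 Hel1) (conj (Rlt_le _ _ Heb) (Rle_refl _)) ltac:(lra) Ht) as Hc.
      rewrite Hx in Hc. assert (0 <= t * (pi_diag tpi th el - pi_diag tpi th ebar)) by (apply Rmult_le_pos; lra). lra. }
    split.
    - split.
      + intros e He. unfold binary_policy, inE in *. destruct (Rle_dec e estar); lra.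
      + intros th' _.
        destruct (Rle_dec (pi_diag tpi th' ebar) (pi_diag tpi th' estar)).
        * exists estar. split; [apply estar_bc; auto|].
          intros e' Hb. destruct (bin_bc _ _ _ Hs Hb) as [->| ->]; lra.
        * exists ebar. split; [apply ebar_bc; lra|].
          intros e' Hb. destruct (bin_bc _ _ _ Hs Hb) as [->| ->]; lra.
    - split; [apply estar_bc; auto|].
      intros e' Hb. destruct (bin_bc _ _ _ Hs Hb) as [->| ->]; lra. }
  split; [|exact Part2].
  split.
  - intros [d [_ [Hbc Hmax]]]. apply Hmin; [exact Hs|].
    pose proof (Hmax ebar (ebar_bc ebar d ltac:(lra))). lra.
  - intros Hle. exists (binary_policy ebar estar). auto.
Qed.
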